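(* Let $k\in\mathbb Z$, $\mathbb N_k=\{l\in\mathbb Z:l\le k\}$, and $\xi$ a random variable with $\mathbb P(\xi=l)=p_l$, $l\in\mathbb N_k$, $p_l\ge0$, $\sum_lp_l=1$, $p_k\in(0,1)$. Let $r_i=\sum_{j\le k-i}p_j$ for integers $i\ge1$. Fix $N\ge1$, let $Z$ be the Markov chain on $\Omega_k$ described in the context, $\bar\nu_N$ its invariant distribution and $\phi(m)=\sup\{i\in\mathbb N_k:m_i>0\}$. Then for each $i\ge2$, $$\bar\nu_N(\phi\le k-i)\le\Big(\frac{r_i}{r_1}\Big)^N\bar\nu_N(\phi\le k-1).$$
   Context: $\Omega_k=\{m\in\{0,\dots,N\}^{\mathbb N_k}:\sum_{i\in\mathbb N_k}m_i=N\}$. The chain $Z$ on $\Omega_k$ has the kernel: from state $m$, take any $x\in\mathbb Z^N$ with exactly $m_l$ coordinates equal to $l$ for each $l\in\mathbb N_k$, let $\{\xi_{i,j}:1\le i,j\le N\}$ be fresh i.i.d. copies of $\xi$, and let the next state be $\big(\#\{i\le N:\max_j(x_j+\xi_{i,j})=\phi(m)+l\}\big)_{l\in\mathbb N_k}$. (Equivalently, $Z_l(t)=\#\{j:X_j(t)=\max_iX_i(t-1)+l\}$ for the particle system $X_i(t+1)=\max_j\{X_j(t)+\xi_{i,j}(t+1)\}$.) $\bar\nu_N$ is its unique invariant probability distribution. *)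

(* Defs.v *)
From mathcomp Require Import all_boot all_order all_algebra.
From mathcomp Require Import boolp classical_sets reals constructive_ereal ereal esum.
Unset Printing Implicit Defensive.
Import Order.TTheory GRing.Theory Num.Theory.
Local Open Scope ring_scope.
Local Open Scope classical_set_scope.

Definition Nk (k : int) : set int := [set l | l <= k].

(* A function on N_k is
   represented by m : int -> nat vanishing outside N_k; the (necessarily
   finitely supported) sum is computed over a finite duplicate-free list
   containing the support. *)
Definition Omega (N : nat) (k : int) : set (int -> nat) :=
  [set m | (forall l, k < l -> m l = 0%N) /\ (forall l, (m l <= N)%N) /\
     exists s : seq int, [/\ uniq s, (forall l, (m l != 0)%N -> l \in s) &
                              (\sum_(l <- s) m l)%N = N]].

Definition cnt (N : nat) (x : 'I_N -> int) (l : int) : nat :=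
  #|[set j | x j == l]|.

Definition phi (k : int) (m : int -> nat) : int :=
  xget k [set s : int | [/\ s <= k, (0 < m s)%N &
                             forall l, l <= k -> (0 < m l)%N -> l <= s]].

Definition rep (N : nat) (k : int) (m : int -> nat) : 'I_N -> int :=
  xget (fun=> k) [set x : 'I_N -> int | forall l, l <= k -> cnt N x l = m l].

Definition next (N : nat) (k : int) (m : int -> nat)
    (xi : 'I_N -> 'I_N -> int) : int -> nat :=
  let x := rep N k m in
  fun l => if l <= k then
    #|[set i : 'I_N | [exists j, x j + xi i j == phi k m + l] &&
                      [forall j, x j + xi i j <= phi k m + l]]|
  else 0%N.

Definition kernel (R : realType) (p : int -> R) (N : nat) (k : int)
    (m m' : int -> nat) : \bar R :=
  \esum_(xi in [set xi : 'I_N -> 'I_N -> int |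
                 (forall i j, xi i j <= k) /\ next N k m xi = m'])
     (\prod_(i < N) \prod_(j < N) p (xi i j))%:E.

Definition invariant_distribution (R : realType) (p : int -> R) (N : nat)
    (k : int) (nu : (int -> nat) -> \bar R) : Prop :=
  [/\ (forall m, (0 <= nu m)%E),
      (forall m, ~ Omega N k m -> nu m = 0%E),
      (\esum_(m in Omega N k) nu m = 1%E) &
      (forall m', Omega N k m' ->
         nu m' = \esum_(m in Omega N k) (nu m * kernel R p N k m m')%E)].

Definition nu_phi_le (N : nat) (k : int) (R : realType)
    (nu : (int -> nat) -> \bar R) (a : int) : \bar R :=
  \esum_(m in Omega N k `&` [set m | phi k m <= a]) nu m.

Definition r (R : realType) (p : int -> R) (k i : int) : R :=
  fine (\esum_(j in [set j : int | j <= k - i]) (p j)%:E).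

(* Main.v *)
Require Import Defs.
From mathcomp Require Import all_boot all_order all_algebra.
From mathcomp Require Import boolp classical_sets reals constructive_ereal ereal esum.
From mathcomp Require Import fsbigop cardinality.
From mathcomp Require Import zify.
From mathcomp Require Import ring lra.
Import Order.TTheory GRing.Theory Num.Theory.
Local Open Scope ring_scope.
Local Open Scope classical_set_scope.

Section Esum.
Variables (R : realType) (T : choiceType).
Local Open Scope ereal_scope.

Lemma esumZl (I : set T) (a : T -> \bar R) (c : R) :
  (0 <= c)%R -> (forall i, 0 <= a i) ->
  \esum_(i in I) (c%:E * a i) = c%:E * \esum_(i in I) a i.
Proof.
move=> c0 a0; rewrite /esum -ereal_supZl //; last first.
  by apply/set0P; exists 0; exists set0; [exact: fsets_set0|rewrite fsbig_set0].
congr ereal_sup; apply/seteqP; split => x /=.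
  move=> [A fA <-]; exists (\sum_(i \in A) a i); first by exists A.
  case: fA => finA _; rewrite !fsbig_finite // ge0_sume_distrr //.
move=> [y [A fA <-] <-]; exists A => //.
case: fA => finA _; rewrite !fsbig_finite // ge0_sume_distrr //.
Qed.

Lemma esum_subset (I J : set T) (a : T -> \bar R) :
  I `<=` J -> (forall i, 0 <= a i) ->
  \esum_(i in I) a i <= \esum_(i in J) a i.
Proof.
move=> IJ a0; rewrite esum_mkcond [X in _ <= X]esum_mkcond.
apply: le_esum => i _; case: ifPn => [/set_mem/IJ Ji|_]; last by case: ifP.
by rewrite ifT // inE.
Qed.

Lemma esum_swap (T2 : choiceType) (I : set T) (J : set T2) (a : T -> T2 -> \bar R) :
  (forall i j, 0 <= a i j) ->
  \esum_(i in I) \esum_(j in J) a i j = \esum_(j in J) \esum_(i in I) a i j.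
Proof.
move=> a0; rewrite !esum_esum //.
rewrite (reindex_esum (J `*` I) _ (fun x => (x.2, x.1))) //; split=> //=.
- by move=> [i j] [/=].
- by move=> [i1 i2] [j1 j2] /= _ _ [] -> ->.
- by move=> [i1 i2] [Pi1 Qi2] /=; exists (i2, i1).
Qed.

End Esum.

Lemma exists_max (T : eqType) (s : seq T) (f : T -> int) x0 :
  x0 \in s -> exists2 y, y \in s & forall z, z \in s -> f z <= f y.
Proof.
elim: s x0 => // a s IH x0; rewrite inE => _.
case: (boolP (has (fun=> true) s)) => [/hasP[z zs _]|].
  have [y ys ym] := IH z zs.
  case: (leP (f a) (f y)) => h.
    exists y; first by rewrite inE ys orbT.
    by move=> z'; rewrite inE => /orP[/eqP->|/ym].
  exists a; first by rewrite inE eqxx.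
  move=> z'; rewrite inE => /orP[/eqP->//|/ym hz]; exact: (le_trans hz (ltW h)).
move=> /hasPn hs; exists a; first by rewrite inE eqxx.
move=> z'; rewrite inE => /orP[/eqP->//|zs]; by have := hs _ zs.
Qed.

Lemma card_sum (T : finType) (P : pred T) : #|[set j | P j]| = (\sum_j P j)%N.
Proof.
rewrite -sum1_card big_mkcond /=; apply: eq_bigr => j _.
case: (boolP (P j)) => h; first by rewrite mem_set.
by rewrite memNset //; apply/negP.
Qed.

Lemma count_lemma (T : finType) (f : T -> int) (s : seq int) : uniq s ->
  (\sum_(l <- s) #|[set j | f j == l]|)%N = #|[set j | f j \in s]|.
Proof.
move=> us; rewrite card_sum.
under eq_bigr do rewrite card_sum.
rewrite exchange_big /=; apply: eq_bigr => j _.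
rewrite -(count_uniq_mem (f j) us) -sum1_count [RHS]big_mkcond /=.
by apply: eq_bigr => l _; rewrite eq_sym; case: (_ == _).
Qed.

Section Prod.
Variables (R : realType) (T : finType) (U : choiceType) (u0 : U).
Variables (A : T -> set U) (g : T -> U -> \bar R).
Hypotheses (g0 : forall t u, (0 <= g t u)%E) (gfin : forall t u, g t u \is a fin_num)
  (Afin : forall t, \esum_(u in A t) g t u \is a fin_num).
Local Open Scope ereal_scope.

Definition Sset (s : seq T) : set (T -> U) :=
  [set f | forall t, (t \in s -> A t (f t)) /\ (t \notin s -> f t = u0)].

Lemma prod_esum_seq (s : seq T) : uniq s ->
  \esum_(f in Sset s) \prod_(t <- s) g t (f t) = \prod_(t <- s) \esum_(u in A t) g t u.
Proof.
elim: s => [_|t0 s IH /= /andP[t0s us]].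
  have -> : Sset [::] = [set (fun=> u0)].
    apply/seteqP; split => f /=.
      by move=> h; apply/funext => t; have [_ ->] := h t.
    by move=> -> t; split.
  by rewrite esum_set1 ?big_nil.
pose e := fun z : U * (T -> U) => fun t => if t == t0 then z.1 else z.2 t.
rewrite (reindex_esum (A t0 `*`` (fun=> Sset s)) _ e); last first.
  split.
  - move=> [u f] [/= Au Sf] t; rewrite /e /=; split.
      rewrite inE; case: (eqVneq t t0) => [->|tt0] //= ts.
      by have [+ _] := Sf t; apply.
    rewrite inE negb_or => /andP[tt0 ts]; rewrite (negPf tt0).
    by have [_ ->] := Sf t.
  - move=> [u1 f1] [u2 f2] /set_mem[/= _ S1] /set_mem[/= _ S2] h.
    have h1 := congr1 (fun F => F t0) h; rewrite /e /= eqxx in h1.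
    rewrite h1; congr pair; apply/funext => t.
    case: (eqVneq t t0) => [->|tt0].
      by have [_ /(_ t0s) ->] := S1 t0; have [_ /(_ t0s) ->] := S2 t0.
    by have := congr1 (fun F => F t) h; rewrite /e /= (negPf tt0).
  - move=> f Sf; exists (f t0, fun t => if t == t0 then u0 else f t).
      split => /=; first by have [+ _] := Sf t0; apply; rewrite inE eqxx.
      move=> t; split.
        move=> ts; have tt0 : t != t0 by apply: contraNneq t0s => <-.
        by rewrite (negPf tt0); have [+ _] := Sf t; apply; rewrite inE ts orbT.
      move=> ts; case: (eqVneq t t0) => // tt0.
      by have [_ ->] := Sf t; rewrite // inE negb_or tt0.
    by apply/funext => t; rewrite /e /=; case: (eqVneq t t0) => [->|].
have ee z : A t0 z.1 -> \prod_(t <- t0 :: s) g t (e z t) =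
    g t0 z.1 * \prod_(t <- s) g t (z.2 t).
  move=> _; rewrite big_cons /e /= eqxx; congr (_ * _).
  apply: eq_big_seq => t ts; have tt0 : t != t0 by apply: contraNneq t0s => <-.
  by rewrite (negPf tt0).
rewrite (eq_esum (b := fun z => g t0 z.1 * \prod_(t <- s) g t (z.2 t))); last first.
  by move=> z [Az _]; apply: ee.
rewrite -(esum_esum (a := fun u f => g t0 u * \prod_(t <- s) g t (f t))); last first.
  by move=> u f _ _; rewrite mule_ge0 // prode_ge0.
have W0 : forall f, 0 <= \prod_(t <- s) g t (f t) by move=> f; rewrite prode_ge0.
rewrite (eq_esum (b := fun u => \esum_(f in Sset s) ((fine (g t0 u))%:E *
    \prod_(t <- s) g t (f t)))); last first.
  by move=> u _; apply: eq_esum => f _; rewrite fineK.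
rewrite (eq_esum (b := fun u => (fine (\prod_(t <- s) \esum_(u in A t) g t u))%:E *
   g t0 u)); last first.
  move=> u _; rewrite esumZl //; last by rewrite fine_ge0.
  by rewrite fineK // IH // fineK ?prode_fin_num // muleC.
rewrite esumZl //; last first.
  by rewrite fine_ge0 // prode_ge0 // => t _; rewrite esum_ge0.
by rewrite fineK ?prode_fin_num // big_cons muleC.
Qed.

Lemma prod_esum :
  \esum_(f in [set f : T -> U | forall t, A t (f t)]) \prod_t g t (f t) =
  \prod_t \esum_(u in A t) g t u.
Proof.
have -> : [set f : T -> U | forall t, A t (f t)] = Sset (index_enum T).
  apply/seteqP; split => f /= h t; first by split => // ; rewrite mem_index_enum.
  by have [+ _] := h t; apply; rewrite mem_index_enum.
by rewrite prod_esum_seq // index_enum_uniq.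
Qed.
End Prod.

Lemma card_cl (T : finType) (P : pred T) : #|[set j | P j]| = #|[pred j | P j]|.
Proof.
apply: eq_card => j; rewrite inE /=.
by case: (boolP (P j)) => h; [rewrite mem_set|rewrite memNset //; apply/negP].
Qed.

Definition phispec (k : int) (m : int -> nat) (y : int) :=
  [/\ y <= k, (0 < m y)%N & forall l, l <= k -> (0 < m l)%N -> l <= y].

Lemma phiP k (m : int -> nat) l0 (s : seq int) :
  (forall l, m l != 0%N -> l \in s) -> (forall l, k < l -> m l = 0%N) ->
  (0 < m l0)%N -> phispec k m (phi k m).
Proof.
move=> supp zk ml0; rewrite /phi.
have l0s : l0 \in [seq l <- s | (0 < m l)%N].
  by rewrite mem_filter ml0 supp // -lt0n.
have [y ys ym] := @exists_max _ _ id _ l0s.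
move: ys; rewrite mem_filter => /andP[my ys].
apply: (@xgetPex _ k (phispec k m)); exists y; split => //.
  by case: (leP y k) => // /zk h; rewrite h in my.
move=> l lk ml; apply: ym; by rewrite mem_filter ml supp // -lt0n.
Qed.

Lemma phi_eq k m y : phispec k m y -> phi k m = y.
Proof.
move=> hy; have [yk my ym] := hy; rewrite /phi.
apply: (@xget_unique _ k (phispec k m)) => // z [zk mz zm].
by apply/le_anti; rewrite ym // zm.
Qed.

Lemma Omega_phi N k m : (0 < N)%N -> Omega N k m -> phispec k m (phi k m).
Proof.
move=> N0 [zk [_ [s [us supp sN]]]].
have : has (fun l => (0 < m l)%N) s.
  apply/negPn/negP => /hasPn h.
  suff : (\sum_(l <- s) m l)%N = 0%N by rewrite sN => h'; rewrite h' in N0.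
  by apply: big1_seq => l /andP[_ ls]; have := h l ls; case: (m l).
by move=> /hasP[l0 _ ml0]; exact: (@phiP k m l0 s supp zk ml0).
Qed.

Lemma rep_spec N k m : Omega N k m -> forall l, l <= k -> cnt N (rep N k m) l = m l.
Proof.
move=> [zk [_ [s [us supp sN]]]].
pose t := flatten [seq nseq (m l) l | l <- s].
have st : size t = N.
  rewrite size_flatten /shape -map_comp -sN sumnE big_map.
  by apply: eq_bigr => l _ /=; rewrite size_nseq.
apply: (@xgetPex _ (fun=> k) (fun x => forall l, l <= k -> cnt N x l = m l)).
exists (fun j : 'I_N => nth k t j) => l _.
rewrite /cnt card_sum.
have -> : (\sum_(j < N) (nth k t j == l))%N = count (pred1 l) t.
  rewrite -sum1_count (big_nth k) st big_mkord [RHS]big_mkcond /=.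
  by apply: eq_bigr => j _; case: (_ == _).
rewrite /t count_flatten -map_comp sumnE big_map /=.
rewrite (eq_bigr (fun l' => if l' == l then m l' else 0%N)); last first.
  by move=> l' _; rewrite count_nseq /=; case: (_ == _); rewrite ?mul1n ?mul0n.
rewrite -big_mkcond /=.
case: (boolP (l \in s)) => ls.
  by rewrite -big_filter filter_pred1_uniq // big_seq1.
have ml0 : m l = 0%N by apply/eqP; apply: contraNT ls; exact: supp.
by rewrite big1 // => l' /eqP ->.
Qed.


Lemma rep_le_k N k m : Omega N k m -> forall j, rep N k m j <= k.
Proof.
move=> Om; have [zk [_ [s [us supp sN]]]] := Om.
set x := rep N k m; pose s2 := [seq l <- s | l <= k].
have u2 : uniq s2 by rewrite filter_uniq.
have h : #|[set j | x j \in s2]| = N.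
  rewrite -(@count_lemma _ x _ u2); apply: etrans sN.
  rewrite big_filter [RHS](bigID (fun l => l <= k)) /= [X in _ = _ + X]big1 ?addn0.
    rewrite addr0; apply: eq_bigr => l lk; exact: rep_spec.
  by move=> l; rewrite -ltNge => /zk.
rewrite card_cl in h.
move=> j; have := cardC [pred j | x j \in s2]; rewrite h card_ord.
move=> /eqP; rewrite -[X in _ == X]addn0 eqn_add2l => /eqP/card0_eq/(_ j).
by rewrite !inE /= => /negbFE; rewrite mem_filter => /andP[].
Qed.

Lemma rep_le_phi N k m : (0 < N)%N -> Omega N k m ->
  forall j, rep N k m j <= phi k m.
Proof.
move=> N0 Om j; have [_ _ pm] := Omega_phi _ _ _ N0 Om.
apply: pm; first exact: rep_le_k.
rewrite -(rep_spec N k m) //; last exact: rep_le_k.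
by rewrite /cnt card_cl; apply/card_gt0P; exists j; rewrite inE /=.
Qed.

Lemma rep_eq_phi N k m : (0 < N)%N -> Omega N k m ->
  exists j, rep N k m j = phi k m.
Proof.
move=> N0 Om; have [pk mp _] := Omega_phi _ _ _ N0 Om.
move: mp; rewrite -(rep_spec N k m) // /cnt card_cl => /card_gt0P[j].
by rewrite inE /= => /eqP; exists j.
Qed.

Section Next.
Variables (N : nat) (k : int) (N0 : (0 < N)%N).

Lemma nextg_Omega (g : 'I_N -> int) : (forall i, g i <= k) ->
  Omega N k (fun l => #|[set i | g i == l]|).
Proof.
move=> gk; split.
  move=> l kl; rewrite card_cl; apply: eq_card0 => i; rewrite !inE /=.
  by apply/negP => /eqP gl; have := gk i; rewrite gl leNgt kl.
split.
  by move=> l; rewrite -[X in (_ <= X)%N]card_ord; apply: max_card.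
exists (undup [seq g i | i <- index_enum 'I_N]); split.
- exact: undup_uniq.
- move=> l; rewrite card_cl -lt0n => /card_gt0P[i]; rewrite inE /= => /eqP <-.
  by rewrite mem_undup map_f // mem_index_enum.
- rewrite count_lemma ?undup_uniq // card_cl -[X in _ = X]card_ord.
  by apply: eq_card => i; rewrite inE /= mem_undup map_f // mem_index_enum.
Qed.

Lemma nextg_phi (g : 'I_N -> int) : (forall i, g i <= k) ->
  exists imax, phi k (fun l => #|[set i | g i == l]|) = g imax /\
     forall i, g i <= g imax.
Proof.
move=> gk.
have i0s : Ordinal N0 \in index_enum 'I_N by rewrite mem_index_enum.
have [imax _ im] := @exists_max _ _ g _ i0s.
have im' : forall i, g i <= g imax by move=> i; apply: im; rewrite mem_index_enum.
exists imax; split => //; apply: phi_eq; split => //.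
  by rewrite card_cl; apply/card_gt0P; exists imax; rewrite inE /=.
move=> l _; rewrite card_cl => /card_gt0P[i]; rewrite inE /= => /eqP <-.
exact: im'.
Qed.

Lemma next_char m (xi : 'I_N -> 'I_N -> int) : Omega N k m ->
  (forall i j, xi i j <= k) ->
  exists g : 'I_N -> int, [/\ forall i, g i <= k,
    forall i j, rep N k m j + xi i j <= phi k m + g i,
    forall i, exists j, rep N k m j + xi i j = phi k m + g i &
    Defs.next N k m xi = (fun l => #|[set i | g i == l]|)].
Proof.
move=> Om xik; set x := rep N k m; set ph := phi k m.
have xph := rep_le_phi _ _ _ N0 Om; rewrite -/x -/ph in xph.
have : forall i, exists j, forall j', x j' + xi i j' <= x j + xi i j.
  move=> i.
  have i0s : Ordinal N0 \in index_enum 'I_N by rewrite mem_index_enum.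
  have [j _ jm] := @exists_max _ _ (fun j => x j + xi i j) _ i0s.
  by exists j => j'; apply: jm; rewrite mem_index_enum.
move=> /choice[jm jmP].
exists (fun i => x (jm i) + xi i (jm i) - ph); split.
- move=> i; have := xph (jm i); have := xik i (jm i); lia.
- move=> i j; have := jmP i j; lia.
- move=> i; exists (jm i); lia.
apply/funext => l; rewrite /Defs.next -/x -/ph.
case: ifPn => lk.
  rewrite !card_cl; apply: eq_card => i; rewrite !inE /=.
  apply/idP/idP.
    move=> /andP[/existsP[j /eqP hj] /forallP hall].
    have h1 := hall (jm i); have h2 := jmP i j; apply/eqP; lia.
  move=> /eqP hg; apply/andP; split.
    by apply/existsP; exists (jm i); apply/eqP; lia.
  by apply/forallP => j; have := jmP i j; lia.
apply/esym; rewrite card_cl; apply: eq_card0 => i; rewrite !inE /=.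
apply/negP => /eqP hg; move: lk; rewrite -ltNge => lk.
have := xph (jm i); have := xik i (jm i); lia.
Qed.
End Next.

Lemma next_props N k m (xi : 'I_N -> 'I_N -> int) a : (0 < N)%N -> Omega N k m ->
  (forall i j, xi i j <= k) ->
  Omega N k (Defs.next N k m xi) /\
  (phi k (Defs.next N k m xi) <= a <->
     forall i j, rep N k m j + xi i j <= phi k m + a).
Proof.
move=> N0 Om xik.
have [g [gk gle geq ->]] := next_char _ _ N0 _ _ Om xik.
split; first exact: nextg_Omega.
have [imax [-> im]] := nextg_phi _ _ N0 _ gk.
split.
  move=> ha i j; have := gle i j; have := im i; lia.
move=> h; have [j hj] := geq imax; have := h imax j; lia.
Qed.

Definition wt (R : realType) (p : int -> R) N (xi : 'I_N -> 'I_N -> int) : \bar R :=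
  (\prod_(i < N) \prod_(j < N) p (xi i j))%:E.
Arguments wt {R} p {N} xi.

Definition box N k m a : set ('I_N -> 'I_N -> int) :=
  [set xi | forall i j, xi i j <= k /\ rep N k m j + xi i j <= phi k m + a].

Lemma wt_ge0 (R : realType) (p : int -> R) N (xi : 'I_N -> 'I_N -> int) : (forall l, 0 <= p l) ->
  (0 <= wt p xi)%E.
Proof.
by move=> p0; rewrite lee_fin; apply: prodr_ge0 => i _; apply: prodr_ge0.
Qed.

Lemma kernel_box (R : realType) (p : int -> R) N k m a :
  (forall l, 0 <= p l) -> (0 < N)%N -> Omega N k m ->
  \esum_(m' in Omega N k `&` [set m' | phi k m' <= a]) kernel R p N k m m' =
  \esum_(xi in box N k m a) wt p xi.
Proof.
move=> p0 N0 Om; rewrite /kernel esum_esum; last by move=> *; exact: wt_ge0.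
rewrite (reindex_esum (box N k m a) _ (fun xi => (Defs.next N k m xi, xi))) //.
split.
- move=> xi /= hb.
  have xik : forall i j, xi i j <= k by move=> i j; have [] := hb i j.
  have [Onx [_ hphi]] := next_props _ _ _ _ a N0 Om xik.
  split; first split => //.
    by apply: hphi => i j; have [] := hb i j.
  by split.
- by move=> xi1 xi2 _ _ [].
- move=> [m' xi] [[Om' pm'] [xik nx]] /=.
  have [_ [hphi _]] := next_props _ _ _ _ a N0 Om xik.
  exists xi; last by rewrite nx.
  move=> i j; split => //; apply: hphi i j; by rewrite nx.
Qed.

Definition Bset N k m a (j : 'I_N) : set int :=
  [set l | l <= k /\ rep N k m j + l <= phi k m + a].

Lemma box_prod (R : realType) (p : int -> R) N k m a :
  (forall l, 0 <= p l) ->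
  (forall S, S `<=` Nk k -> \esum_(l in S) (p l)%:E \is a fin_num) ->
  \esum_(xi in box N k m a) wt p xi =
  (\prod_(i < N) \prod_(j < N)
     \esum_(l in Bset N k m a j) (p l)%:E)%E.
Proof.
move=> p0 Sfin.
set B := Bset N k m a.
have Bfin : forall j, \esum_(l in B j) (p l)%:E \is a fin_num.
  by move=> j; apply: Sfin => l [].
have rowE : forall i : 'I_N, \esum_(v in [set v : 'I_N -> int | forall j, B j (v j)])
    (\prod_(j < N) (p (v j))%:E)%E = (\prod_(j < N) \esum_(l in B j) (p l)%:E)%E.
  move=> i; apply: (@prod_esum R _ _ 0 B (fun j l => (p l)%:E)); try done.

have -> : box N k m a = [set f | forall i, [set v : 'I_N -> int | forall j, B j (v j)] (f i)].
  apply/seteqP; split => f /= h i.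
    by move=> j; have [] := h i j.
  by move=> j; have := h i j.
rewrite (eq_esum (b := fun f : 'I_N -> 'I_N -> int =>
   (\prod_(i < N) \prod_(j < N) (p (f i j))%:E)%E)); last first.
  by move=> f _; rewrite /wt -prodEFin; apply: eq_bigr => i _; rewrite prodEFin.
rewrite (@prod_esum R _ _ (fun=> 0) (fun i => [set v : 'I_N -> int | forall j, B j (v j)])
   (fun i v => (\prod_(j < N) (p (v j))%:E)%E)).
- by apply: eq_bigr => i _; rewrite (rowE i).
all: try by move=> t u; apply: prode_ge0 => j _; rewrite lee_fin.
all: try by move=> t; rewrite (rowE t); apply: prode_fin_num.
all: try by move=> t u; apply: prode_fin_num.
Qed.

Lemma row_ineq (R : realFieldType) N (u v : 'I_N -> R) j0 (a b : R) :
  (forall j, 0 <= u j <= v j) -> u j0 = a -> v j0 = b -> 0 <= a -> 0 <= b ->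
  (\prod_j u j) * b <= a * \prod_j v j.
Proof.
move=> uv ua vb a0 b0.
rewrite (bigD1 j0) //= [X in _ <= _ * X](bigD1 j0) //= ua vb.
have h : \prod_(j | j != j0) u j <= \prod_(j | j != j0) v j by apply: ler_prod.
have h0 : 0 <= \prod_(j | j != j0) u j by apply: prodr_ge0 => j _; have /andP[] := uv j.
have := mulr_ge0 a0 b0; nra.
Qed.

Lemma per_m (R : realType) (p : int -> R) N k m (i : int) :
  (forall l, 0 <= p l) ->
  (forall S, S `<=` Nk k -> \esum_(l in S) (p l)%:E \is a fin_num) ->
  (0 < N)%N -> Omega N k m -> 1 <= i -> 0 < Defs.r R p k 1 ->
  (\esum_(xi in box N k m (k - i)) wt p xi <=
   ((Defs.r R p k i / Defs.r R p k 1) ^+ N)%:E * \esum_(xi in box N k m (k - 1)) wt p xi)%E.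
Proof.
move=> p0 Sfin N0 Om i1 r1pos.
have Bfin : forall a j, \esum_(l in Bset N k m a j) (p l)%:E \is a fin_num.
  by move=> a j; apply: Sfin => l [].
rewrite !box_prod //.
pose u j := fine (\esum_(l in Bset N k m (k - i) j) (p l)%:E).
pose v j := fine (\esum_(l in Bset N k m (k - 1) j) (p l)%:E).
have -> : (\prod_(i0 < N) \prod_(j < N) \esum_(l in Bset N k m (k - i) j) (p l)%:E)%E =
   (\prod_(i0 < N) \prod_(j < N) u j)%:E.
  rewrite -prodEFin; apply: eq_bigr => i0 _; rewrite -prodEFin.
  by apply: eq_bigr => j _; rewrite /u fineK.
have -> : (\prod_(i0 < N) \prod_(j < N) \esum_(l in Bset N k m (k - 1) j) (p l)%:E)%E =
   (\prod_(i0 < N) \prod_(j < N) v j)%:E.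
  rewrite -prodEFin; apply: eq_bigr => i0 _; rewrite -prodEFin.
  by apply: eq_bigr => j _; rewrite /v fineK.
rewrite -EFinM lee_fin.
have [j0 hj0] := rep_eq_phi _ _ _ N0 Om.
have BE : forall a, a <= k -> Bset N k m a j0 = [set l : int | l <= a].
  move=> a ak; apply/seteqP; split => l /=; rewrite /Bset /= hj0.
    by move=> [_ h]; lia.
  by move=> h; split; lia.
have uv : forall j, 0 <= u j <= v j.
  move=> j; apply/andP; split.
    by apply: fine_ge0; apply: esum_ge0 => l _; rewrite lee_fin.
  apply: fine_le; rewrite ?inE; try exact: Bfin.
  apply: esum_subset; last by move=> l; rewrite lee_fin.
  by move=> l [h1 h2]; split => //; lia.
have ui : u j0 = Defs.r R p k i by rewrite /u BE //; lia.
have v1 : v j0 = Defs.r R p k 1 by rewrite /v BE //; lia.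
have ri0 : 0 <= Defs.r R p k i by rewrite -ui; have /andP[] := uv j0.
have row := @row_ineq _ _ u v j0 _ _ uv ui v1 ri0 (ltW r1pos).
have -> : ((Defs.r R p k i / Defs.r R p k 1) ^+ N) =
   \prod_(i0 < N) (Defs.r R p k i / Defs.r R p k 1) by rewrite prodr_const card_ord.
rewrite -big_split /=; apply: ler_prod => i0 _; apply/andP; split.
  by apply: prodr_ge0 => j _; have /andP[] := uv j.
rewrite mulrAC ler_pdivlMr //.
Qed.

Theorem lemma6p2 (R : realType) (k : int) (p : int -> R)
  (p_ge0 : forall l, 0 <= p l)
  (p_supp : forall l, k < l -> p l = 0)
  (p_sum : (\esum_(l in Nk k) (p l)%:E = 1)%E)
  (pk_pos : 0 < p k) (pk_lt1 : p k < 1)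
  (N : nat) (N_ge1 : (1 <= N)%N)
  (nu : (int -> nat) -> \bar R)
  (nu_inv : invariant_distribution R p N k nu)
  (i : int) (i_ge2 : 2 <= i) :
  (nu_phi_le N k R nu (k - i) <=
     ((r R p k i / r R p k 1) ^+ N)%:E * nu_phi_le N k R nu (k - 1))%E.
Proof.
have [nu0 nuz nu1 nuinv] := nu_inv.
have N0 : (0 < N)%N by [].
have pE0 : forall l, (0 <= (p l)%:E)%E by move=> l; rewrite lee_fin.
have Sfin : forall S, S `<=` Nk k -> \esum_(l in S) (p l)%:E \is a fin_num.
  move=> S SN; rewrite ge0_fin_numE ?esum_ge0 //.
  by apply: (le_lt_trans (@esum_subset _ _ _ _ _ SN pE0)); rewrite p_sum ltry.
have r1pos : 0 < Defs.r R p k 1.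
  have := esumID [set k] (Nk k) (fun l => (p l)%:E) (fun l _ => pE0 l).
  have -> : Nk k `&` [set k] = [set k].
    apply/seteqP; split => l /=; first by case.
    by move=> ->; split => //; rewrite /Nk /=.
  have -> : Nk k `&` ~` [set k] = [set l | l <= k - 1].
    apply/seteqP; split => l /=; rewrite /Nk /=.
      by move=> [h1 h2]; lia.
    by move=> h; split; lia.
  rewrite p_sum esum_set1 // => h.
  have Efin : \esum_(l in [set l : int | l <= k - 1]) (p l)%:E \is a fin_num.
    by apply: Sfin => l /=; rewrite /Nk /=; lia.
  move: h; rewrite -(fineK Efin) -EFinD => -[h].
  rewrite /Defs.r; lra.
have nufin : forall m, nu m = (fine (nu m))%:E.
  move=> m; case: (pselect (Omega N k m)) => Om; last by rewrite nuz.
  rewrite fineK // ge0_fin_numE //; apply: (le_lt_trans _ (ltry 1)).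
  rewrite -nu1; apply: esum_ge; exists [set m].
    by split; [exact: finite_set1|move=> x /= ->].
  by rewrite fsbig_set1.
have K0 : forall m m', (0 <= kernel R p N k m m')%E.
  by move=> m m'; apply: esum_ge0 => xi _; exact: wt_ge0.
have step : forall a, nu_phi_le N k R nu a =
    \esum_(m in Omega N k) (nu m * \esum_(xi in box N k m a) wt p xi)%E.
  move=> a; rewrite /nu_phi_le.
  rewrite (eq_esum (b := fun m' => \esum_(m in Omega N k) (nu m * kernel R p N k m m')%E));
    last by move=> m' [Om' _]; exact: nuinv.
  rewrite esum_swap; last by move=> m m'; rewrite mule_ge0.
  apply: eq_esum => m Om.
  rewrite nufin esumZl //; last exact: fine_ge0.
  by rewrite kernel_box.
rewrite !step.
set C := (r R p k i / r R p k 1) ^+ N.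
have C0 : 0 <= C.
  apply: exprn_ge0; apply: divr_ge0; last exact: ltW.
  by apply: fine_ge0; apply: esum_ge0.
apply: (@le_trans _ _ (\esum_(m in Omega N k)
   (nu m * (C%:E * \esum_(xi in box N k m (k - 1)) wt p xi))%E)).
  apply: le_esum => m Om; apply: lee_wpmul2l => //.
  apply: per_m => //; lia.
rewrite -esumZl //; last first.
  by move=> m; rewrite mule_ge0 // esum_ge0 // => xi _; exact: wt_ge0.
by apply: le_esum => m _; rewrite muleCA.
Qed.
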